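(* In the setting described in the context, suppose Method 1 does not stop, and let $(x^k)_{k\in\mathbb N}$ be the generated sequence (with associated $(\bar x^k)$, $(\alpha_k)$). Then: (i) $(x^k)$ is Fejér convergent to $\operatorname{zer}(A+B)$, i.e. for every $x\in\operatorname{zer}(A+B)$, $\|x^{k+1}-x\|\le\|x^k-x\|$ for all $k$ sufficiently large; (ii) $(x^k)$ is bounded; (iii) $\lim_{k\to\infty}\Big(\langle x^k-\bar x^k-\alpha_k(A_2x^k-A_2\bar x^k),\,x^k-\bar x^k\rangle-\bar\delta\|x^k-\bar x^k\|^2\Big)=0$.
   Context: Let $\mathcal H$ be a real Hilbert space with inner product $\langle\cdot,\cdot\rangle$ and norm $\|\cdot\|$. Let $A_1:\mathcal H\to\mathcal H$ be $\beta$-cocoercive for some $\beta>0$ (i.e. $\langle A_1x-A_1y,x-y\rangle\ge\beta\|A_1x-A_1y\|^2$ for all $x,y$), let $A_2:\mathcal H\to\mathcal H$ be maximally monotone and uniformly continuous, let $B:\mathcal H\rightrightarrows\mathcal H$ be maximally monotone, and set $A:=A_1+A_2$. Assume $\operatorname{zer}(A+B):=\{x:0\in Ax+Bx\}\neq\emptyset$. $J_{\alpha B}:=(I+\alpha B)^{-1}$ for $\alpha>0$, and $P_C$ denotes the orthogonal projection onto a nonempty closed convex set $C$. Fix $\theta,\delta\in(0,1)$, $\bar\delta>0$ with $1-\delta-\bar\delta>0$, and $\alpha_{-1}>0$ with $\alpha_{-1}\le4\beta\bar\delta$. Conceptual Algorithm: pick $x^0\in\mathcal H$. Given $x^k$ and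 $\alpha_{k-1}$, for $j\in\mathbb N$ let $\bar x^k_j:=J_{\alpha_{k-1}\theta^jB}(x^k-\alpha_{k-1}\theta^jAx^k)$ and let $j(k)$ be the smallest $j\in\mathbb N$ with $\alpha_{k-1}\theta^j\langle A_2x^k-A_2\bar x^k_j,x^k-\bar x^k_j\rangle\le\delta\|x^k-\bar x^k_j\|^2$. Set $\alpha_k:=\alpha_{k-1}\theta^{j(k)}$, $\bar x^k:=J_{\alpha_kB}(x^k-\alpha_kAx^k)$, $r_k:=\frac{\bar\delta}{\alpha_k}\|x^k-\bar x^k\|^2$ and $T_k:=\{x\in\mathcal H:\langle \frac{x^k-\bar x^k}{\alpha_k}-(A_2x^k-A_2\bar x^k),x-\bar x^k\rangle\le r_k\}$. Method 1 sets $x^{k+1}:=P_{T_k}(x^k)$ and stops if $x^{k+1}=x^k$. *)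

(* Defs.v *)
From HB Require Import structures.
From mathcomp Require Import all_boot all_order all_algebra.
From mathcomp Require Import all_classical all_reals all_analysis.
Set Implicit Arguments. Unset Strict Implicit. Unset Printing Implicit Defensive.
Import Order.TTheory GRing.Theory Num.Theory.
Import numFieldNormedType.Exports.
Local Open Scope classical_set_scope.
Local Open Scope ring_scope.

Section Defs.
Variables (R : realType) (H : normedModType R).

(* ip is a real inner product on H inducing the norm of H.  Together with
   completeness of H (H : completeNormedModType R) this makes H a real
   Hilbert space. *)
Definition is_inner_product (ip : H -> H -> R) : Prop :=
  [/\ (forall x y, ip x y = ip y x),
      (forall a x y z, ip (a *: x + y) z = a * ip x z + ip y z) &
      (forall x, `|x| ^+ 2 = ip x x)].

Variable ip : H -> H -> R.

Definition cocoercive (beta : R) (T : H -> H) : Prop :=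
  forall x y, beta * `|T x - T y| ^+ 2 <= ip (T x - T y) (x - y).

Definition monotone_op (B : H -> set H) : Prop :=
  forall x y u v, B x u -> B y v -> 0 <= ip (u - v) (x - y).

Definition maximally_monotone (B : H -> set H) : Prop :=
  monotone_op B /\
  forall x u, (forall y v, B y v -> 0 <= ip (u - v) (x - y)) -> B x u.

Definition single_op (T : H -> H) : H -> set H := fun x => [set T x].

Definition uniformly_continuous_op (T : H -> H) : Prop :=
  forall e : R, 0 < e -> exists2 d : R, 0 < d &
    forall x y, `|x - y| < d -> `|T x - T y| < e.

(* p = J_{a B} z  i.e.  z \in p + a B p  (single-valued for maximally monotone B, a > 0) *)
Definition is_resolvent (B : H -> set H) (a : R) (z p : H) : Prop :=
  exists2 b, B p b & z = p + a *: b.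

Definition is_projection (C : set H) (z p : H) : Prop :=
  C p /\ forall y, C y -> `|z - p| <= `|z - y|.

Definition zer_sum (A : H -> H) (B : H -> set H) : set H :=
  fun x => B x (- A x).

Definition Tk (A2 : H -> H) (xk xbk : H) (ak dbar : R) : set H :=
  fun x => ip (ak^-1 *: (xk - xbk) - (A2 xk - A2 xbk)) (x - xbk)
           <= dbar / ak * `|xk - xbk| ^+ 2.

(* The sequences (x^k), (xbar^k), (alpha_k), (j(k)) are generated by Method 1
   (conceptual algorithm with x^{k+1} = P_{T_k}(x^k)) from x^0 = x 0 and alpha_{-1} = am1. *)
Definition method1 (A1 A2 : H -> H) (B : H -> set H) (theta delta dbar am1 : R)
  (x xb : nat -> H) (alpha : nat -> R) (j : nat -> nat) : Prop :=
  let aprev k := if k is k'.+1 then alpha k' else am1 in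
  let A z := A1 z + A2 z in
  let test k (i : nat) (p : H) :=
    aprev k * theta ^+ i * ip (A2 (x k) - A2 p) (x k - p) <= delta * `|x k - p| ^+ 2 in
  forall k,
    [/\ (forall i p, (i < j k)%N ->
           is_resolvent B (aprev k * theta ^+ i) (x k - (aprev k * theta ^+ i) *: A (x k)) p ->
           ~ test k i p),
        alpha k = aprev k * theta ^+ j k,
        is_resolvent B (alpha k) (x k - alpha k *: A (x k)) (xb k),
        test k (j k) (xb k) &
        is_projection (Tk A2 (x k) (xb k) (alpha k) dbar) (x k) (x k.+1)].

End Defs.

(* Main.v *)
Require Import Defs.
From HB Require Import structures.
From mathcomp Require Import all_boot all_order all_algebra.
From mathcomp Require Import all_classical all_reals all_analysis.
From mathcomp Require Import ring lra.
Import Order.TTheory GRing.Theory Num.Theory.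
Import numFieldNormedType.Exports.
Local Open Scope classical_set_scope.
Local Open Scope ring_scope.


Set Implicit Arguments.
Section IP.
Variables (R : realType) (H : normedModType R) (ip : H -> H -> R).
Hypothesis hip : is_inner_product ip.

Lemma ipC x y : ip x y = ip y x. Proof. by case: hip. Qed.
Lemma ipxx x : ip x x = `|x| ^+ 2. Proof. by case: hip. Qed.
Lemma ipL a x y z : ip (a *: x + y) z = a * ip x z + ip y z. Proof. by case: hip. Qed.
Lemma ip0l z : ip 0 z = 0.
Proof. have := ipL 1 0 0 z; rewrite scaler0 addr0 mul1r => h. lra. Qed.
Lemma ipDl x y z : ip (x + y) z = ip x z + ip y z.
Proof. by have := ipL 1 x y z; rewrite scale1r mul1r. Qed.
Lemma ipZl a x z : ip (a *: x) z = a * ip x z.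
Proof. by rewrite -(addr0 (a *: x)) ipL ip0l addr0. Qed.
Lemma ipNl x z : ip (- x) z = - ip x z.
Proof. by rewrite -scaleN1r ipZl mulN1r. Qed.
Lemma ipBl x y z : ip (x - y) z = ip x z - ip y z.
Proof. by rewrite ipDl ipNl. Qed.
Lemma ipDr x y z : ip z (x + y) = ip z x + ip z y.
Proof. by rewrite ipC ipDl ![ip _ z]ipC. Qed.
Lemma ipZr a x z : ip z (a *: x) = a * ip z x.
Proof. by rewrite ipC ipZl ipC. Qed.
Lemma ipNr x z : ip z (- x) = - ip z x.
Proof. by rewrite ipC ipNl ipC. Qed.
Lemma ipBr x y z : ip z (x - y) = ip z x - ip z y.
Proof. by rewrite ipDr ipNr. Qed.

Lemma normD2 u v : `|u + v| ^+ 2 = `|u| ^+ 2 + 2 * ip u v + `|v| ^+ 2.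
Proof. rewrite -!ipxx ipDl !ipDr (ipC v u); ring. Qed.
Lemma normB2 u v : `|u - v| ^+ 2 = `|u| ^+ 2 - 2 * ip u v + `|v| ^+ 2.
Proof. rewrite -!ipxx ipBl !ipBr (ipC v u); ring. Qed.

Lemma CS u v : ip u v <= `|u| * `|v|.
Proof.
have h := normB2 (`|v| *: u) (`|u| *: v).
rewrite !normrZ !ger0_norm // ipZl ipZr in h.
set w := `|v| *: u - `|u| *: v.
have h0 : 0 <= `|w| ^+ 2 by apply: sqr_ge0.
have hu := normr_ge0 u; have hv := normr_ge0 v.
have [u0|upos] := eqVneq `|u| 0.
  move/eqP: u0; rewrite normr_eq0 => /eqP ->; rewrite ip0l normr0; lra.
have [v0|vpos] := eqVneq `|v| 0.
  move/eqP: v0; rewrite normr_eq0 => /eqP ->; rewrite ipC ip0l normr0; lra.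
have hu' : 0 < `|u| by rewrite lt_neqAle eq_sym upos.
have hv' : 0 < `|v| by rewrite lt_neqAle eq_sym vpos.
have : 0 <= 2 * (`|u| * `|v|) * (`|u| * `|v| - ip u v) by nra.
rewrite pmulr_rge0; first lra.
apply: mulr_gt0 => //; apply: mulr_gt0 => //.
Qed.


Lemma sq_le (a b : R) : 0 <= a -> a <= b -> a ^+ 2 <= b ^+ 2.
Proof. move=> ha hab; rewrite ler_pXn2r // ?nnegrE //; lra. Qed.

Lemma proj_VI (C : set H) y p z : is_projection C y p -> C z ->
  (forall t : R, 0 < t <= 1 -> C (p + t *: (z - p))) -> ip (y - p) (z - p) <= 0.
Proof.
move=> [Cp hp] Cz hc.
have key : forall t : R, 0 < t <= 1 -> 2 * ip (y - p) (z - p) <= t * `|z - p| ^+ 2.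
  move=> t /andP [t0 t1].
  have := hp _ (hc t (introT andP (conj t0 t1))).
  move=> /(@sq_le _ _ (normr_ge0 _)) h.
  have e : y - (p + t *: (z - p)) = (y - p) - t *: (z - p).
    by rewrite opprD addrA.
  move: h; rewrite e (normB2 (y - p)) normrZ ipZr (ger0_norm (ltW t0)) => h.
  have : t * (2 * ip (y - p) (z - p)) <= t * (t * `|z - p| ^+ 2) by nra.
  by rewrite ler_pM2l.
rewrite leNgt; apply/negP => s0.
set s := ip (y - p) (z - p) in s0 key.
set N := `|z - p| ^+ 2 in key.
have N0 : 0 <= N by rewrite /N sqr_ge0.
have sN : 0 < s + N by lra.
set t := s / (s + N).
have ht : t * (s + N) = s by rewrite /t divfK // gt_eqF.
have t0 : 0 < t by rewrite /t divr_gt0.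
have t1 : t <= 1 by rewrite /t ler_pdivrMr //; lra.
have := key t (introT andP (conj t0 t1)).
nra.
Qed.

Lemma proj_fejer (C : set H) y p z : is_projection C y p -> C z ->
  (forall t : R, 0 < t <= 1 -> C (p + t *: (z - p))) ->
  `|y - p| ^+ 2 + `|p - z| ^+ 2 <= `|y - z| ^+ 2.
Proof.
move=> hp Cz hc; have := @proj_VI C y p z hp Cz hc.
have -> : y - z = (y - p) + (p - z) by rewrite addrA subrK.
rewrite (normD2 (y - p)) -(opprB z p) ipNr; lra.
Qed.

End IP.

Set Implicit Arguments.
Lemma uc_bounded (R : realType) (H : normedModType R) (T : H -> H) :
  uniformly_continuous_op T -> forall K : R, exists M : R,
  forall x y, `|x - y| <= K -> `|T x - T y| <= M.
Proof.
move=> uc K; have [d d0 hd] := uc 1 ltr01.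
have P : forall n x y, `|x - y| < d * 2 ^+ n -> `|T x - T y| < 2 ^+ n.
  elim=> [|n IH] x y; first by rewrite !expr0 mulr1; apply: hd.
  move=> hxy; set m := y + 2^-1 *: (x - y).
  have e1 : x - m = (1 - 2^-1) *: (x - y) by rewrite scalerBl scale1r opprD addrA.
  have e2 : m - y = 2^-1 *: (x - y) by rewrite /m addrC addKr.
  have h1 : `|x - m| < d * 2 ^+ n.
    rewrite e1 normrZ ger0_norm; last lra.
    move: hxy; rewrite exprS mulrCA; lra.
  have h2 : `|m - y| < d * 2 ^+ n.
    rewrite e2 normrZ ger0_norm; last lra.
    move: hxy; rewrite exprS mulrCA; lra.
  have := IH _ _ h1; have := IH _ _ h2.
  have := ler_distD (T m) (T x) (T y).
  rewrite exprS; lra.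
have Kd : 0 <= `|K| / d by rewrite divr_ge0 // ltW.
set N := Num.Def.archi_bound (`|K| / d).
have hN := archi_boundP Kd.
have hN2 : (N%:R : R) < 2 ^+ N by rewrite -natrX ltr_nat ltn_expl.
exists (2 ^+ N) => x y hxy; apply: ltW; apply: P.
have : `|K| < d * 2 ^+ N.
  rewrite -ltr_pdivrMl //; rewrite mulrC; apply: (lt_trans hN hN2).
have := ler_norm K; lra.
Qed.

Lemma subACA (R : realType) (H : normedModType R) (x p z q : H) :
  (x - p) - (z - q) = (x - z) - (p - q).
Proof. by rewrite !opprD addrACA. Qed.

Lemma addBACA (R : realType) (H : normedModType R) (x p z q : H) :
  (x + p) - (z + q) = (x - z) + (p - q).
Proof. by rewrite !opprD addrACA. Qed.

Lemma sq_le_inv (R : realType) (a b : R) : 0 <= a -> 0 <= b -> a ^+ 2 <= b ^+ 2 -> a <= b.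
Proof. move=> ha hb h; rewrite leNgt; apply/negP => hl. nra. Qed.

Set Implicit Arguments.
Section Main.
Variables (R : realType) (H : normedModType R) (ip : H -> H -> R).
Hypothesis hip : is_inner_product ip.

Lemma Tk_convex A2 xk xbk a dbar p z :
  Tk ip A2 xk xbk a dbar p -> Tk ip A2 xk xbk a dbar z ->
  forall t : R, 0 < t <= 1 -> Tk ip A2 xk xbk a dbar (p + t *: (z - p)).
Proof.
rewrite /Tk => hp hz t /andP [t0 t1].
set w := _ - _ in hp hz *; set r := _ * _ in hp hz *.
have -> : p + t *: (z - p) - xbk = (p - xbk) + t *: (z - p) by rewrite addrAC.
rewrite (ipDr hip) (ipZr hip) !(ipBr hip).
rewrite !(ipBr hip) in hp hz.
have h1 : 0 <= (1 - t) * (r - (ip w p - ip w xbk)) by apply: mulr_ge0; lra.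
have h2 : 0 <= t * (r - (ip w z - ip w xbk)) by apply: mulr_ge0; lra.
lra.
Qed.

Lemma resolvent_b (B : H -> set H) (a : R) (u xbk : H) : 0 < a -> is_resolvent B a u xbk ->
  exists2 b, B xbk b & b = a^-1 *: (u - xbk).
Proof.
move=> a0 [b Bb ->]; exists b => //.
by rewrite addrC addKr scalerA mulVf ?gt_eqF // scale1r.
Qed.


Ltac ipexp hip := rewrite ?(ipDl hip, ipBl hip, ipNl hip, ipZl hip, ipDr hip, ipBr hip, ipNr hip, ipZr hip).

Lemma zer_in_T (A1 A2 : H -> H) (B : H -> set H) (beta dbar a : R) (xk xbk z : H) :
  0 < beta -> cocoercive ip beta A1 -> monotone_op ip (single_op A2) ->
  monotone_op ip B -> 0 < a -> a <= 4 * beta * dbar ->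
  is_resolvent B a (xk - a *: (A1 xk + A2 xk)) xbk -> B z (- (A1 z + A2 z)) ->
  Tk ip A2 xk xbk a dbar z.
Proof.
move=> b0 hco hm2 hmB a0 hab hres hz.
have [b Bb hb] := resolvent_b a0 hres.
have hmono := hmB _ _ _ _ Bb hz.
have hA2 := hm2 xbk z (A2 xbk) (A2 z) erefl erefl.
have hc := hco xk z.
have hb' : b = a^-1 *: (xk - xbk) - (A1 xk + A2 xk).
  by rewrite hb addrAC scalerBr scalerA mulVf ?gt_eqF // scale1r.
rewrite hb' in hmono.
have hag : 0 <= `|(2 * beta) *: (A1 xk - A1 z) - (xk - xbk)| ^+ 2 by apply: sqr_ge0.
rewrite (normB2 hip) normrZ (ipZl hip) (@ger0_norm _ (2 * beta)) ?exprMn in hag; last lra.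
set S := ip (A1 xk - A1 z) (xk - xbk) in hag.
set N := `|A1 xk - A1 z| ^+ 2 in hag hc.
set D := `|xk - xbk| ^+ 2 in hag *.
have D0 : 0 <= D by apply: sqr_ge0.
have F2 : S - beta * N <= D / (4 * beta).
  rewrite ler_pdivlMr; last lra. nra.
have F3 : D / (4 * beta) <= dbar / a * D.
  have h : (4 * beta)^-1 <= dbar / a.
    rewrite ler_pdivlMr // mulrC ler_pdivrMr; lra.
  rewrite [D / _]mulrC; exact: ler_wpM2r.
have hS : S = ip (A1 xk - A1 z) (xk - xbk) by [].
rewrite /Tk -/D; set e := a^-1 *: (xk - xbk) in hmono *; clearbody e.
move: hS hmono hA2 hc; ipexp hip.
move=> hS hmono hA2 hc.
lra.
Qed.


Lemma resolvent_nonexp (B : H -> set H) (a : R) (u v p q : H) :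
  0 < a -> monotone_op ip B -> is_resolvent B a u p -> is_resolvent B a v q ->
  `|p - q| <= `|u - v|.
Proof.
move=> a0 hmB [b Bb ->] [c Bc ->].
have hm := hmB _ _ _ _ Bb Bc.
rewrite addBACA -scalerBr.
apply: sq_le_inv => //.
rewrite (normD2 hip (p - q)) (ipZr hip) normrZ (ipC hip) (ger0_norm (ltW a0)).
have := sqr_ge0 (a * `|b - c|).
have : 0 <= a * ip (b - c) (p - q) by apply: mulr_ge0 => //; exact: ltW.
lra.
Qed.

Lemma coco_lip (A1 : H -> H) (beta : R) x y : 0 < beta -> cocoercive ip beta A1 ->
  `|A1 x - A1 y| <= `|x - y| / beta.
Proof.
move=> b0 hco; rewrite ler_pdivlMr //.
have h := hco x y; have hcs := CS hip (A1 x - A1 y) (x - y).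
have n0 := normr_ge0 (A1 x - A1 y); have m0 := normr_ge0 (x - y).
have [e0|] := eqVneq `|A1 x - A1 y| 0; first by rewrite e0 mul0r.
move=> ne; have np : 0 < `|A1 x - A1 y| by rewrite lt_neqAle eq_sym ne.
rewrite -(ler_pM2l np); nra.
Qed.

End Main.

Unset Implicit Arguments.
Theorem proposition4p7 (R : realType) (H : completeNormedModType R)
  (ip : H -> H -> R) (A1 A2 : H -> H) (B : H -> set H)
  (beta theta delta dbar am1 : R)
  (x xb : nat -> H) (alpha : nat -> R) (j : nat -> nat) :
  is_inner_product ip ->
  0 < beta -> cocoercive ip beta A1 ->
  maximally_monotone ip (single_op A2) -> uniformly_continuous_op A2 ->
  maximally_monotone ip B ->
  zer_sum (fun z => A1 z + A2 z) B !=set0 ->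
  0 < theta < 1 -> 0 < delta < 1 -> 0 < dbar -> 0 < 1 - delta - dbar ->
  0 < am1 -> am1 <= 4 * beta * dbar ->
  method1 ip A1 A2 B theta delta dbar am1 x xb alpha j ->
  (* Method 1 does not stop *)
  (forall k, x k.+1 <> x k) ->
  [/\ (* (i) Fejer convergence to zer(A+B) *)
      (forall z, zer_sum (fun w => A1 w + A2 w) B z ->
         exists N, forall k, (N <= k)%N -> `|x k.+1 - z| <= `|x k - z|),
      (* (ii) boundedness *)
      (exists M : R, forall k, `|x k| <= M) &
      (* (iii) *)
      (fun k => ip (x k - xb k - alpha k *: (A2 (x k) - A2 (xb k))) (x k - xb k)
                - dbar * `|x k - xb k| ^+ 2) @ \oo --> (0 : R)].
Proof.
move=> hip b0 hco [hm2 _] uc [hmB _] [z0 hz0] /andP[th0 th1] /andP[de0 de1] db0 hcd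
  am0 amb hm _.
have hal : forall k, 0 < alpha k /\ alpha k <= am1.
  elim=> [|k [IH1 IH2]].
    have [_ -> _ _ _] := hm 0%N => /=.
    have t1 := exprn_ile1 (j 0%N) (ltW th0) (ltW th1).
    have t0 := exprn_gt0 (j 0%N) th0.
    split; nra.
  have [_ -> _ _ _] := hm k.+1 => /=.
  have t1 := exprn_ile1 (j k.+1) (ltW th0) (ltW th1).
  have t0 := exprn_gt0 (j k.+1) th0.
  split; nra.
have hT : forall z k, zer_sum (fun w => A1 w + A2 w) B z ->
    Tk ip A2 (x k) (xb k) (alpha k) dbar z.
  move=> z k hz; have [_ _ hres _ _] := hm k; have [a0 a1] := hal k.
  apply: (zer_in_T hip _ _ _ b0 hco hm2 hmB a0 _ hres hz); lra.
have fej : forall z k, zer_sum (fun w => A1 w + A2 w) B z ->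
    `|x k - x k.+1| ^+ 2 + `|x k.+1 - z| ^+ 2 <= `|x k - z| ^+ 2.
  move=> z k hz; have [_ _ _ _ hp] := hm k.
  apply: (proj_fejer hip _ hp (hT z k hz)) => t ht.
  exact: (Tk_convex hip hp.1 (hT z k hz) t ht).
have fej1 : forall z k, zer_sum (fun w => A1 w + A2 w) B z ->
    `|x k.+1 - z| <= `|x k - z|.
  move=> z k hz; apply: sq_le_inv => //.
  have := fej z k hz; have := sqr_ge0 `|x k - x k.+1|; lra.
have fejN : forall k, `|x k - z0| <= `|x 0%N - z0|.
  elim=> // k IH; exact: le_trans (fej1 z0 k hz0) IH.
split.
- move=> z hz; exists 0%N => k _; exact: fej1.
- exists (`|x 0%N - z0| + `|z0|) => k.
  have := fejN k; have := ler_normD (x k - z0) z0; rewrite subrK; lra.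
set rho := `|x 0%N - z0|.
have rho0 : 0 <= rho by apply: normr_ge0.
have fejR : forall k, `|x k - z0| <= rho := fejN.
have [M1 hM1] := uc_bounded uc rho.
have M10 : 0 <= M1.
  by have := hM1 z0 z0; rewrite !subrr normr0; apply.
set rho' := rho + am1 * (rho / beta + M1).
have hxb : forall k, `|xb k - z0| <= rho'.
  move=> k; have [_ _ hres _ _] := hm k; have [a0 a1] := hal k.
  have hzr : is_resolvent B (alpha k) (z0 - alpha k *: (A1 z0 + A2 z0)) z0.
    by exists (- (A1 z0 + A2 z0)) => //; rewrite scalerN.
  have := resolvent_nonexp hip a0 hmB hres hzr.
  rewrite subACA -scalerBr addBACA.
  move=> h; apply: (le_trans h); apply: (le_trans (ler_normB _ _)).
  rewrite normrZ (ger0_norm (ltW a0)).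
  have h1 := coco_lip hip (x k) z0 b0 hco.
  have h2 := hM1 (x k) z0 (fejR k).
  have h3 := ler_normD (A1 (x k) - A1 z0) (A2 (x k) - A2 z0).
  have h4 := fejN k.
  have h5 : `|x k - z0| / beta <= rho / beta by rewrite ler_pM2r ?invr_gt0.
  set Q := `|_ + _| in h3 *.
  have Q0 : 0 <= Q by apply: normr_ge0.
  have : alpha k * Q <= am1 * (rho / beta + M1).
    apply: ler_pM; lra.
  have h4' : `|x k - z0| <= rho := fejN k.
  rewrite /rho'; lra.
have hd : forall k, `|x k - xb k| <= rho + rho'.
  move=> k; have := ler_distD z0 (x k) (xb k); rewrite (distrC z0).
  have := fejR k; have := hxb k; lra.
have [M2 hM2] := uc_bounded uc (rho + rho').
set C := rho + rho' + am1 * M2.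
have hq : forall k, 0 <= ip (x k - xb k - alpha k *: (A2 (x k) - A2 (xb k))) (x k - xb k)
                - dbar * `|x k - xb k| ^+ 2 <= C * `|x k - x k.+1|.
  move=> k; have [_ Ha _ Htest hp] := hm k; have [a0 a1] := hal k.
  rewrite -Ha in Htest.
  set d := x k - xb k in Htest *.
  set D2 := A2 (x k) - A2 (xb k) in Htest *.
  apply/andP; split.
    rewrite (ipBl hip) (ipZl hip) (ipxx hip).
    have := mulr_ge0 (ltW hcd) (sqr_ge0 `|d|); lra.
  have hT1 := hp.1; rewrite /Tk -/d -/D2 in hT1.
  have hv : d - alpha k *: D2 = alpha k *: ((alpha k)^-1 *: d - D2).
    by rewrite [RHS]scalerBr scalerA mulfV ?gt_eqF // scale1r.
  have e1 : ip (d - alpha k *: D2) (x k.+1 - xb k) <= dbar * `|d| ^+ 2.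
    rewrite hv (ipZl hip).
    have := ler_wpM2l (ltW a0) hT1.
    have ee : alpha k * (dbar / alpha k * `|d| ^+ 2) = dbar * `|d| ^+ 2.
      by field; rewrite gt_eqF.
    by rewrite ee.
  have e2 : x k - x k.+1 = d - (x k.+1 - xb k) by rewrite opprB addrA subrK.
  have e3 := CS hip (d - alpha k *: D2) (x k - x k.+1).
  rewrite e2 (ipBr hip) -e2 in e3.
  have e4 : `|d - alpha k *: D2| <= C.
    apply: (le_trans (ler_normB _ _)).
    rewrite normrZ (ger0_norm (ltW a0)).
    have := hM2 _ _ (hd k); rewrite -/D2 => h6.
    have := hd k; rewrite -/d => h7.
    have D20 := normr_ge0 D2.
    have : alpha k * `|D2| <= am1 * M2 by apply: ler_pM; lra.
    rewrite /C; lra.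
  have e5 := ler_wpM2r (normr_ge0 (x k - x k.+1)) e4.
  lra.
have C0 : 0 <= C.
  have rr0 : 0 <= rho + rho' by apply: le_trans (hd 0%N).
  have M20 : 0 <= M2 by have := hM2 z0 z0; rewrite !subrr normr0; apply.
  rewrite /C; have := mulr_ge0 (ltW am0) M20; lra.
set a_ := fun k => `|x k - z0| ^+ 2.
have hdec : {homo a_ : n m / (n <= m)%N >-> m <= n}.
  apply/nonincreasing_seqP => n; rewrite /a_.
  have := fej z0 n hz0; have := sqr_ge0 `|x n - x n.+1|; lra.
have hlb : has_lbound (range a_) by exists 0 => _ [k _ <-]; apply: sqr_ge0.
have ha := nonincreasing_cvgn hdec hlb.
have ha1 : (fun k => a_ k.+1) @ \oo --> inf (range a_).
  by have := ha; rewrite -cvg_shiftS.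
have hD : (a_ - (fun k => a_ k.+1)) @ \oo --> (0:R).
  by rewrite -(subrr (inf (range a_))); exact: cvgB.
apply/cvgrPdist_lt => eps eps0.
set s := eps / (C + 1).
have s0 : 0 < s by rewrite divr_gt0 //; lra.
have hs : s * (C + 1) = eps by rewrite /s divfK // gt_eqF //; lra.
have hev : \forall t \near \oo, `|0 - (a_ - (fun k => a_ k.+1)) t| < s ^+ 2.
  exact: ((cvgrPdist_lt _ _).1 hD (s ^+ 2) (exprn_gt0 2 s0)).
move: hev; apply: filterS => k /=; rewrite sub0r normrN => hk.
have := hq k => /andP [q0 q1].
rewrite sub0r normrN ger0_norm //.
have hf := fej z0 k hz0.
have e0 := normr_ge0 (x k - x k.+1).
have hk' : `|x k - x k.+1| ^+ 2 < s ^+ 2.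
  have := ler_norm (a_ k - a_ k.+1); rewrite /a_ in hk * => h.
  have := sqr_ge0 `|x k.+1 - z0|; lra.
have he : `|x k - x k.+1| < s by rewrite ltNge; apply/negP => hh; nra.
have : C * `|x k - x k.+1| <= C * s by apply: ler_wpM2l => //; exact: ltW.
nra.
Qed.
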